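(* Let $\mathcal{S}$ be a locating-dominating set of $G_{2,m}=P_2\square P_m$, with vertices labeled $v_1,\dots,v_{2m}$ as described in the context. Suppose there is a $(2\times 4)$-block $\mathcal{B}$ of $G_{2,m}$ consisting of the vertices $v_i,\dots,v_{i+7}$ such that $|\mathcal{B}\cap\mathcal{S}|=2$. Then $i\neq 1$, $i+7\neq 2m$, and $v_{i-2},v_{i-1},v_{i+8},v_{i+9}\in\mathcal{S}$.
   Context: $P_n$ is the path on $n$ vertices, $\square$ the Cartesian product, and $G_{n,m}=P_n\square P_m$ is viewed as a grid with $n$ rows and $m$ columns. Vertices are labeled column by column: the vertex in row $r$ ($1\le r\le n$) and column $c$ ($1\le c\le m$) is $v_{r+n(c-1)}$; vertices in the same column (or same row, adjacent columns) are adjacent as in the grid. A $(n\times \ell)$-block is the set of vertices in $\ell$ consecutive columns. For $C\subseteq V(G)$ and $v\in V(G)$ let $I(v)=N[v]\cap C$ ($N[v]$ the closed neighborhood). $C$ is a locating-dominating set if $I(v)\neq\emptyset$ for all $v\in V(G)\setminus C$ and $I(u)\neq I(v)$ for all distinct $u,v\in V(G)\setminus C$. *)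

(* Defs.v *)
From mathcomp Require Import all_boot.
Set Implicit Arguments. Unset Strict Implicit. Unset Printing Implicit Defensive.

Definition gvertex (n m k : nat) : bool := (1 <= k) && (k <= n * m).

Definition grow (n k : nat) : nat := (k - 1) %% n + 1.
Definition gcol (n k : nat) : nat := (k - 1) %/ n + 1.

Definition gadj (n m u v : nat) : bool :=
  [&& gvertex n m u, gvertex n m v &
   ((gcol n u == gcol n v) && ((grow n u == (grow n v).+1) || (grow n v == (grow n u).+1)))
   || ((grow n u == grow n v) && ((gcol n u == (gcol n v).+1) || (gcol n v == (gcol n u).+1)))].

Definition gclosed_nbhd (n m v u : nat) : bool :=
  (gvertex n m v && (u == v)) || gadj n m v u.

Definition Iset (n m : nat) (C : pred nat) (v : nat) : pred nat :=
  fun u => gclosed_nbhd n m v u && C u.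

Definition locating_dominating (n m : nat) (C : pred nat) : Prop :=
  (forall k, C k -> gvertex n m k) /\
  (forall v, gvertex n m v -> ~~ C v -> exists u, Iset n m C v u) /\
  (forall u v, gvertex n m u -> gvertex n m v -> ~~ C u -> ~~ C v -> u <> v ->
     exists w, Iset n m C u w != Iset n m C v w).

(* the (n x l)-block made of columns c, ..., c+l-1 (requires 1 <= c, c+l-1 <= m):
   its vertices are v_i, ..., v_{i + n*l - 1} with i = n*(c-1)+1 *)
Definition block_start (n m l i : nat) : Prop :=
  exists c, [/\ 1 <= c, c + l - 1 <= m & i = n * (c - 1) + 1].

(* Main.v *)
Require Import Defs.
From mathcomp Require Import all_boot zify.

Lemma dec2 u : 1 <= u -> exists a r, [/\ r < 2, u = a * 2 + r + 1, gcol 2 u = a + 1, grow 2 u = r + 1 & odd u = (r == 0)].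
Proof.
move=> Hu; exists ((u-1) %/ 2), ((u-1) %% 2).
have E := divn_eq (u-1) 2; have L : (u-1) %% 2 < 2 by rewrite ltn_pmod.
have Eu : u = (u - 1) %/ 2 * 2 + (u - 1) %% 2 + 1 by lia.
split => //; rewrite {1}Eu addn1 /= oddD oddM andbF /=.
by move: L; case: ((u-1) %% 2) => [|[|]].
Qed.

Lemma gadj2 m u v : gadj 2 m u v = [&& gvertex 2 m u, gvertex 2 m v &
  [|| u == v + 2, v == u + 2, odd u && (v == u + 1) | odd v && (u == v + 1)]].
Proof.
rewrite /gadj; case Hu: (gvertex 2 m u) => //=; case Hv: (gvertex 2 m v) => //=.
move: Hu Hv; rewrite /gvertex => /andP[Hu _] /andP[Hv _].
have [a [r [Lr Eu Cu Ru Ou]]] := dec2 u Hu.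
have [b [s [Ls Ev Cv Rv Ov]]] := dec2 v Hv.
rewrite Cu Ru Cv Rv Ou Ov; clear Cu Ru Cv Rv Ou Ov.
move: Lr Ls Eu Ev; case: r => [|[|]] // _; case: s => [|[|]] // _ => -> -> /=;
repeat (case: eqP => /= ?); lia.
Qed.

Definition ladj (j k : nat) : bool :=
  [|| k == j + 2, j == k + 2, ~~ odd j && (k == j + 1) | ~~ odd k && (j == k + 1)].
Definition localI (x y : nat -> bool) (j k : nat) : bool :=
  [&& y k, x k & (k == j) || ladj j k].
Definition localLD (x y : nat -> bool) : bool :=
  all (fun j => x j || has (localI x y j) (iota 0 12)) (iota 2 8) &&
  all (fun j => all (fun k => [|| x j, x k, j == k |
        has (fun w => localI x y j w != localI x y k w) (iota 0 12)]) (iota 2 8)) (iota 2 8).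

Lemma eq_localLD x y x' y' : (forall j, j < 12 -> x j = x' j) ->
  (forall j, j < 12 -> y j = y' j) -> localLD x y = localLD x' y'.
Proof.
move=> Hx Hy.
have HI j k : k < 12 -> localI x y j k = localI x' y' j k.
  by move=> Hk; rewrite /localI Hx ?Hy.
have HI2 j : j < 12 -> has (localI x y j) (iota 0 12) = has (localI x' y' j) (iota 0 12).
  by move=> Hj; apply: eq_in_has => k; rewrite mem_iota => /andP[_ Hk]; rewrite HI.
rewrite /localLD; congr (_ && _).
  apply: eq_in_all => j; rewrite mem_iota => /andP[_ Hj].
  rewrite Hx ?HI2 //; lia.
apply: eq_in_all => j; rewrite mem_iota => /andP[_ Hj].
apply: eq_in_all => k; rewrite mem_iota => /andP[_ Hk].
rewrite Hx ?Hx; try lia.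
congr [|| _, _, _ | _].
apply: eq_in_has => w; rewrite mem_iota => /andP[_ Hw].
rewrite !HI //.
Qed.

Fixpoint allb (n : nat) (P : seq bool -> bool) : bool :=
  match n with 0 => P [::] | n.+1 => allb n (fun s => P (true :: s)) && allb n (fun s => P (false :: s)) end.

Lemma allbP n P : allb n P -> forall s, size s = n -> P s.
Proof.
elim: n P => [|n IH] P /=; first by move=> H [].
move=> /andP[H1 H2] [|b s] //= [Hs].
by case: b; [apply: (IH _ H1) | apply: (IH _ H2)].
Qed.

Definition ys (p q : bool) := [:: p; p; true; true; true; true; true; true; true; true; q; q].

Definition finprop (xs : seq bool) : bool :=
  all (fun p => all (fun q =>
    let x := nth false xs in let y := nth false (ys p q) in
    if count x (iota 2 8) == 2 then
    if all (fun j => x j ==> y j) (iota 0 12) then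
    if localLD x y then
    [&& p, q, x 0, x 1, x 10 & x 11] else true else true else true) [:: true; false]) [:: true; false].

Lemma fincheck : allb 12 finprop.
Proof. vm_compute. reflexivity. Qed.

Lemma finuse xs p q : size xs = 12 ->
  count (nth false xs) (iota 2 8) = 2 ->
  all (fun j => nth false xs j ==> nth false (ys p q) j) (iota 0 12) ->
  localLD (nth false xs) (nth false (ys p q)) ->
  [&& p, q, nth false xs 0, nth false xs 1, nth false xs 10 & nth false xs 11].
Proof.
move=> Hs Hc Ha Hl.
have := allbP _ _ fincheck _ Hs; rewrite /finprop.
move=> /allP /(_ p ltac:(by rewrite !inE; case: (p))).
move=> /allP /(_ q ltac:(by rewrite !inE; case: (q))).
by rewrite Hc eqxx Ha Hl.
Qed.

Lemma oddE a b : a %% 2 = b %% 2 -> odd a = odd b.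
Proof. by rewrite !modn2; case: (odd a); case: (odd b). Qed.

Lemma shiftE d i j k : 3 <= i + j -> 3 <= i + k ->
  (i + k - 2 == i + j - 2 + d) = (k == j + d).
Proof. by move=> H1 H2; apply/eqP/eqP; lia. Qed.

Theorem lemma4p4 (m : nat) (S : pred nat) (i : nat) :
  locating_dominating 2 m S ->
  block_start 2 m 4 i ->
  count S (iota i 8) = 2 ->
  [/\ i <> 1, i + 7 <> 2 * m, S (i - 2), S (i - 1) & (S (i + 8) && S (i + 9))].
Proof.
move=> [Hsv [Hdom Hsep]] [c [Hc1 Hcm Ei]] Hcnt.
pose x := fun k => S (i + k - 2).
pose y := fun k => gvertex 2 m (i + k - 2).
have Gv j : 2 <= j < 10 -> gvertex 2 m (i + j - 2).
  by move=> Hj; rewrite /gvertex; apply/andP; split; lia.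
have HIs j k : 2 <= j < 10 -> k < 12 -> Iset 2 m S (i + j - 2) (i + k - 2) = localI x y j k.
  move=> Hj Hk; rewrite /Iset /gclosed_nbhd gadj2 /localI /x /y Gv //=.
  case Sw: (S (i + k - 2)); last by rewrite !andbF.
  have Hw := Hsv _ Sw; rewrite Hw /= andbT.
  have Hw1 : 1 <= i + k - 2 by move: Hw => /andP[].
  have O1 : odd (i + j - 2) = ~~ odd j by rewrite (@oddE _ (j + 1)) ?addn1 //; lia.
  have O2 : odd (i + k - 2) = ~~ odd k by rewrite (@oddE _ (k + 1)) ?addn1 //; lia.
  have Hik : 3 <= i + k by lia.
  have Hij : 3 <= i + j by lia.
  have E1 : (i + k - 2 == i + j - 2) = (k == j) by rewrite -(addn0 (i + j - 2)) shiftE // addn0.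
  rewrite (@shiftE 2 _ _ _ Hij Hik) (@shiftE 2 _ _ _ Hik Hij) (@shiftE 1 _ _ _ Hij Hik) (@shiftE 1 _ _ _ Hik Hij).
  rewrite /ladj O1 O2 E1.
  by case: (j == k + 2); case: (k == j + 2); rewrite /= ?orbT.
have Hwin j w : 2 <= j < 10 -> Iset 2 m S (i + j - 2) w -> exists2 k, k < 12 & w = i + k - 2.
  move=> Hj; rewrite /Iset /gclosed_nbhd gadj2 => /andP[H _].
  case/orP: H => [/andP[_ /eqP ->] | /and3P[_ /andP[Hw1 _] Hr]].
    by exists j; lia.
  case/or4P: Hr => [/eqP E|/eqP E|/andP[_ /eqP E]|/andP[_ /eqP E]]; exists (w + 2 - i); lia.
have HL : localLD x y.
  apply/andP; split.
    apply/allP => j; rewrite mem_iota => Hj; cbv beta.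
    have [Xj|Xj] := boolP (x j); first by apply/orP; left.
    apply/orP; right.
    have [w Hw] := Hdom (i + j - 2) (Gv j Hj) Xj.
    have [k Hk Ew] := Hwin j w Hj Hw.
    by apply/hasP; exists k; [rewrite mem_iota | rewrite -HIs // -Ew].
  apply/allP => j; rewrite mem_iota => Hj; apply/allP => k; rewrite mem_iota => Hk; cbv beta.
  have [Xj|Xj] := boolP (x j); first by apply/orP; left.
  have [Xk|Xk] := boolP (x k); first by apply/orP; right; apply/orP; left.
  have [Ejk|Hjk] := eqVneq j k.
    by do 2 (apply/orP; right); apply/orP; left; apply/eqP.
  do 3 (apply/orP; right).
  have Hne : i + j - 2 <> i + k - 2 by move=> E; move/eqP: Hjk; lia.
  have [w Hw] := Hsep (i + j - 2) (i + k - 2) (Gv j Hj) (Gv k Hk) Xj Xk Hne.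
  case Hu: (Iset 2 m S (i + j - 2) w).
    have [k' Hk' Ew] := Hwin j w Hj Hu.
    by apply/hasP; exists k'; [rewrite mem_iota | rewrite -!HIs // -Ew].
  have Hv : Iset 2 m S (i + k - 2) w by move: Hw; rewrite Hu; case: (Iset _ _ _ _ _).
  have [k' Hk' Ew] := Hwin k w Hk Hv.
  by apply/hasP; exists k'; [rewrite mem_iota | rewrite -!HIs // -Ew].
pose xs := map x (iota 0 12).
have Hnx j : j < 12 -> nth false xs j = x j.
  by move=> Hj; rewrite /xs (nth_map 0) ?size_iota // nth_iota.
have Y01 : y 1 = y 0 by rewrite /y /gvertex; apply/andP/andP; case=> ? ?; split; lia.
have Y1011 : y 11 = y 10 by rewrite /y /gvertex; apply/andP/andP; case=> ? ?; split; lia.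
have Ymid j : 2 <= j < 10 -> y j by move=> Hj; apply: Gv.
have Hny j : j < 12 -> nth false (ys (y 0) (y 10)) j = y j.
  move=> Hj; do 12! (case: j Hj => [|j] Hj; first by rewrite /= ?Y01 ?Y1011 // Ymid).
  lia.
have := @finuse xs (y 0) (y 10).
rewrite size_map size_iota => /(_ erefl).
have -> : count (nth false xs) (iota 2 8) = 2.
  rewrite -[RHS]Hcnt (@eq_in_count _ _ x); last by move=> j; rewrite mem_iota => Hj; apply: Hnx; lia.
  have E1 : iota i 8 = map (addn i) (iota 0 8) by rewrite -iotaDl addn0.
  have E2 : iota 2 8 = map (addn 2) (iota 0 8) by rewrite -iotaDl.
  rewrite E1 E2 !count_map; apply: eq_count => k /=.
  by rewrite /x; have -> : i + (2 + k) - 2 = i + k by lia.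
move=> /(_ erefl).
have -> : all (fun j => nth false xs j ==> nth false (ys (y 0) (y 10)) j) (iota 0 12).
  apply/allP => j; rewrite mem_iota => Hj; rewrite Hnx ?Hny //; try lia.
  by apply/implyP => /Hsv.
move=> /(_ erefl).
rewrite (@eq_localLD _ _ x y Hnx Hny) => /(_ HL).
rewrite !Hnx // /x /y => /and5P[Hp Hq H0 H1 /andP[H10 H11]].
move: Hp Hq; rewrite /gvertex => /andP[Hp _] /andP[_ Hq].
split; first lia; first lia.
- by have -> : i - 2 = i + 0 - 2 by lia.
- by have -> : i - 1 = i + 1 - 2 by lia.
- have -> : i + 8 = i + 10 - 2 by lia.
  have -> : i + 9 = i + 11 - 2 by lia.
  by rewrite H10 H11.
Qed.
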